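(* Let $F\in L^2(\mu)$ and $m\in\mathbb N$. Then $F\in\mathcal D^{m,2}$ if and only if \[ \sup_{0<\lambda<1}\partial_\lambda^m\left(\int_{\mathcal S'_{\mathbb C}}|SF(\lambda u)|^2\,d\nu(u)\right)<\infty . \]
   Context: Let $\mu$ be the white noise (standard Gaussian) measure on the tempered distributions $\mathcal S'=\mathcal S'(\mathbb R;\mathbb R)$, i.e. $\int e^{i\langle\xi,x\rangle}d\mu(x)=e^{-|\xi|^2/2}$ for $\xi$ in the Schwartz space $\mathcal S$, where $|\cdot|$ is the $L^2(\mathbb R,dx)$ norm. Every $F\in L^2(\mu)$ (complex valued) has a Wiener–Itô chaos decomposition $F=\sum_{n\ge0}\langle F^{(n)},:\cdot^{\otimes n}:\rangle$ with symmetric kernels $F^{(n)}\in L^2(\mathbb R^n,dx)_{\mathbb C}$ and $\|F\|^2_{L^2(\mu)}=\sum_n n!|F^{(n)}|^2$. The $S$-transform is $SF(h)=\sum_n\langle F^{(n)},h^{\otimes n}\rangle$ for $h\in\mathcal S_{\mathbb C}$ (equivalently $SF(h)=\int\exp(\langle h,\omega\rangle-\tfrac12\langle h,h\rangle)F(\omega)d\mu(\omega)$). Let $\nu$ be the Gaussian measure on $\mathcal S'_{\mathbb C}$ with $\int\exp(i\,\mathrm{Re}\langle h,\bar u\rangle)d\nu(u)=\exp(-\tfrac14\langle h,\bar h\rangle)$; for square-integrable symmetric kernels the monomials $u\mapsto\langle F^{(n)},u^{\otimes n}\rangle$ are defined in $L^2(\nu)$, mutually orthogonal for different $n$, with $\int|\langle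 F^{(n)},u^{\otimes n}\rangle|^2d\nu=n!|F^{(n)}|^2$, and $SF(\lambda u):=\sum_n\lambda^n\langle F^{(n)},u^{\otimes n}\rangle$. For $\alpha\in\mathbb R$, the Malliavin–Watanabe–Sobolev space $\mathcal D^{\alpha,2}$ consists of those (generalized) chaos series $\Phi$ with square-integrable symmetric kernels $\Phi^{(n)}$ such that $\|\Phi\|^2_{\alpha,2}=\sum_{n\ge0}(1+n^\alpha)\,n!\,|\Phi^{(n)}|^2<\infty$. *)

(* Defs.v *)
From HB Require Import structures.
From mathcomp Require Import all_boot all_order all_algebra.
From mathcomp Require Import all_classical all_reals all_analysis.
Set Implicit Arguments. Unset Strict Implicit. Unset Printing Implicit Defensive.
Import Order.TTheory GRing.Theory Num.Theory numFieldNormedType.Exports.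
Local Open Scope ring_scope.
Local Open Scope classical_set_scope.

(* An element F of L^2(mu) is described through its Wiener-Ito chaos
   decomposition.  [kn n] stands for |F^(n)|^2, the squared L^2(R^n) norm of
   the n-th kernel (a nonnegative real).  *)

Definition in_L2mu (R : realType) (kn : nat -> R) : Prop :=
  (forall n, 0 <= kn n) /\ cvgn (series (fun n => n`!%:R * kn n)).

Definition in_Dm2 (R : realType) (m : nat) (kn : nat -> R) : Prop :=
  cvgn (series (fun n => (1 + n%:R ^+ m) * n`!%:R * kn n)).

(* The monomials u |-> <F^(n), u^{(x)n}> in L^2(nu), given by their real part
   [Mre n] and imaginary part [Mim n].  The hypotheses below are exactly the
   facts stated in the context: they lie in L^2(nu), are mutually orthogonal
   for different n (complex inner product  int M_n conj(M_k) dnu = 0),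
   and int |M_n|^2 dnu = n! |F^(n)|^2. *)
Definition monomials_of (R : realType) (d : measure_display)
  (U : measurableType d) (nu : probability U R) (kn : nat -> R)
  (Mre Mim : nat -> U -> R) : Prop :=
  [/\ (forall n, measurable_fun setT (Mre n) /\ measurable_fun setT (Mim n)),
      (forall n, nu.-integrable setT (fun u => ((Mre n u) ^+ 2)%:E) /\
                 nu.-integrable setT (fun u => ((Mim n u) ^+ 2)%:E)),
      (forall n, (\int[nu]_u ((Mre n u) ^+ 2 + (Mim n u) ^+ 2)%:E
                  = (n`!%:R * kn n)%:E)%E) &
      (forall n k, n != k ->
        (\int[nu]_u (Mre n u * Mre k u + Mim n u * Mim k u)%:E = 0)%E /\
        (\int[nu]_u (Mim n u * Mre k u - Mre n u * Mim k u)%:E = 0)%E)].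

(* lambda |-> int |SF(lambda u)|^2 dnu(u), where
   SF(lambda u) = sum_n lambda^n <F^(n), u^{(x)n}> is the L^2(nu)-limit of the
   partial sums; its squared norm is the limit of the squared norms of the
   partial sums. *)
Definition SF2_nu (R : realType) (d : measure_display)
  (U : measurableType d) (nu : probability U R) (Mre Mim : nat -> U -> R)
  (lam : R) : R :=
  limn (fun N : nat => fine (\int[nu]_u
      (((\sum_(n < N) lam ^+ n * Mre n u) ^+ 2 +
        (\sum_(n < N) lam ^+ n * Mim n u) ^+ 2)%:E))%E).

(* Main.v *)
Require Import Defs.
From HB Require Import structures.
From mathcomp Require Import all_boot all_order all_algebra.
From mathcomp Require Import all_classical all_reals all_analysis measurable_realfun.
Import Order.TTheory GRing.Theory Num.Theory numFieldNormedType.Exports.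
Local Open Scope ring_scope.
Local Open Scope classical_set_scope.
From mathcomp Require Import ring lra zify.

Section Aux.
Variable R : realType.

Lemma bern_aux (t s : R) j : 0 <= t -> t <= s ->
  t ^+ j.+1 + j%:R * (s - t) * t ^+ j <= t * s ^+ j.
Proof.
move=> t0 ts; elim: j => [|j IH]; first by rewrite !expr0 !mul0r addr0 mulr1 expr1.
have X0 : 0 <= t ^+ j by rewrite exprn_ge0.
have S0 : 0 <= s ^+ j by rewrite exprn_ge0 // (le_trans t0 ts).
have J0 : 0 <= j%:R :> R by rewrite ler0n.
rewrite !exprS -!mulrA in IH *.
rewrite mulrSr.
set X := t ^+ j in IH X0 *; set Y := s ^+ j in IH S0 *; set J := j%:R in IH J0 *.
have H1 : s * (t * X + J * ((s - t) * X)) <= s * (t * Y) by rewrite ler_wpM2l // (le_trans t0 ts).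
have H2 : 0 <= J * (s - t) * (s - t) * X.
  by rewrite !mulr_ge0 // subr_ge0.
nra.
Qed.

Lemma cvg_lin_geom (t : R) : 0 <= t < 1 ->
  cvgn (series (fun j => j.+1%:R * t ^+ j)).
Proof.
move=> /andP[t0 t1].
pose s := (1 + t) / 2.
have ts : t < s by rewrite /s; lra.
have s1 : s < 1 by rewrite /s; lra.
have s0 : 0 < s by rewrite /s; lra.
have st0 : 0 < s - t by lra.
apply: (@series_le_cvg _ _ (geometric (1 + (s - t)^-1) s)).
- by move=> n; rewrite mulr_ge0 // exprn_ge0.
- by move=> n; rewrite /geometric /= mulr_ge0 ?exprn_ge0 ?ltW // ltr_wpDr // invr_ge0 ltW.
- move=> j; rewrite /geometric /=.
  have := @bern_aux t s j t0 (ltW ts).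
  have X0 : 0 <= t ^+ j by rewrite exprn_ge0.
  have XY : t ^+ j <= s ^+ j by rewrite lerXn2r // ?nnegrE ?ltW // (le_trans t0 (ltW ts)).
  have Y0 : 0 <= s ^+ j by rewrite exprn_ge0 // ltW.
  rewrite exprS => H.
  have H3 : j%:R * t ^+ j <= s ^+ j / (s - t).
    rewrite ler_pdivlMr //.
    have : t * s ^+ j <= s ^+ j by rewrite ler_piMl //; apply: ltW.
    have : 0 <= t * t ^+ j by rewrite mulr_ge0.
    nra.
  rewrite -addn1 natrD mulrDl mul1r mulrDl mul1r.
  lra.
- by apply: is_cvg_geometric_series; rewrite ger0_norm ?ltW.
Qed.


Lemma pseries_diffs_cvg (f : nat -> R) :
  (forall y : R, `|y| < 1 -> cvgn (pseries f y)) ->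
  forall y : R, `|y| < 1 -> cvgn (pseries (pseries_diffs f) y).
Proof.
move=> H y y1.
pose r := (1 + `|y|) / 2.
have r1 : r < 1 by rewrite /r; lra.
have yr : `|y| < r by rewrite /r; lra.
have r0 : 0 < r by rewrite /r; have := normr_ge0 y; lra.
have Hr : `|r| < 1 by rewrite ger0_norm ?ltW.
have [B [_ HB]] := cvg_series_bounded (H r Hr).
have [B' [B'0 {}HB]] : exists B' : R, 0 < B' /\ forall j, `|f j * r ^+ j| <= B'.
  exists (`|B| + 1); split; first by have := normr_ge0 B; lra.
  by move=> j; apply: HB => //; have := ler_norm B; lra.
clear B.
pose t := `|y| / r.
have t0 : 0 <= t < 1.
  by rewrite /t divr_ge0 //= ?ltW // ltr_pdivrMr // mul1r.
have yt : `|y| = t * r by rewrite /t divfK // gt_eqF.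
rewrite /pseries; apply: (@normed_cvg R R^o).
apply: (@series_le_cvg _ _ (B' / r *: (fun j => j.+1%:R * t ^+ j))).
- by move=> n; exact: normr_ge0.
- move=> n; rewrite /= mulr_ge0 //; first by rewrite divr_ge0 // ltW.
  by rewrite mulr_ge0 // exprn_ge0 //; case/andP: t0.
- move=> j /=.
  rewrite /pseries_diffs normrM normrM normrX yt exprMn ger0_norm ?ler0n //.
  have -> : ((B' / r) *: (fun j0 : nat => j0.+1%:R * t ^+ j0)) j = B' / r * (j.+1%:R * t ^+ j) by [].
  have HF : `|f j.+1| * r ^+ j <= B' / r.
    rewrite ler_pdivlMr // -mulrA -exprSr.
    by have := HB j.+1; rewrite normrM normrX (ger0_norm (ltW r0)).
  have T0 : 0 <= j.+1%:R * t ^+ j by rewrite mulr_ge0 // exprn_ge0 //; case/andP: t0.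
  have -> : j.+1%:R * `|f j.+1| * (t ^+ j * r ^+ j) =
            (j.+1%:R * t ^+ j) * (`|f j.+1| * r ^+ j) by ring.
  by rewrite mulrC ler_wpM2r.
- exact/is_cvg_seriesZ/cvg_lin_geom.
Qed.


Lemma iter_diffs_cvg (f : nat -> R) :
  (forall y : R, `|y| < 1 -> cvgn (pseries f y)) ->
  forall k (y : R), `|y| < 1 -> cvgn (pseries (iter k (@pseries_diffs R) f) y).
Proof.
move=> H; elim=> [//|k IH] y y1.
by rewrite iterS; apply: pseries_diffs_cvg.
Qed.

Lemma iter_diffsE (f : nat -> R) k j :
  iter k (@pseries_diffs R) f j = ((j + k) ^_ k)%:R * f (j + k)%N.
Proof.
elim: k j => [|k IH] j; first by rewrite /= ffactn0 mul1r addn0.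
rewrite iterS /pseries_diffs IH mulrA -natrM.
congr (_%:R * f _); last by rewrite addSnnS.
by rewrite ffactnSr -addSnnS addnK mulnC.
Qed.

Definition cc (a : nat -> R) i := if odd i then 0 else a i./2.

Lemma sum_sparse (G : nat -> R) N :
  \sum_(0 <= i < N.*2) (if odd i then 0 else G i./2) = \sum_(0 <= n < N) G n.
Proof.
elim: N => [|N IH]; first by rewrite !big_geq.
rewrite doubleS !big_nat_recr //= IH odd_double /= addr0.
by rewrite -[(N.*2)./2]/(half (double N)) doubleK.
Qed.

Lemma series_cc (a : nat -> R) (x : R) N :
  series (fun i => cc a i * x ^+ i) N.*2 = series (fun n => a n * (x ^+ 2) ^+ n) N.
Proof.
rewrite /series /= -(sum_sparse (fun n => a n * (x ^+ 2) ^+ n)); apply: eq_bigr => i _.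
rewrite /cc; case: ifP => oi; first by rewrite mul0r.
congr (_ * _); rewrite -exprM mul2n.
by have := odd_double_half i; rewrite oi add0n => ->.
Qed.


Lemma double_infty : (fun n : nat => n.*2) @ \oo --> \oo.
Proof.
move=> P [M _ HP]; exists M => // n /= Mn; apply: HP.
by rewrite /= -addnn (leq_trans Mn) // leq_addr.
Qed.

Lemma cc_cvg1 (a : nat -> R) : (forall n, 0 <= a n) -> cvgn (series a) ->
  cvgn (pseries (cc a) 1).
Proof.
move=> a0 ca.
have c0 : forall i, 0 <= cc a i * 1 ^+ i by move=> i; rewrite expr1n mulr1 /cc; case: ifP.
apply: nondecreasing_is_cvgn.
  by move=> m n mn; apply: nondecreasing_series => // i _ _; exact: c0.
exists (limn (series a)) => _ [n _ <-].
apply: (@le_trans _ _ (series (fun i => cc a i * 1 ^+ i) n.*2)).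
  by apply: nondecreasing_series => //; [move=> i _ _; exact: c0 | rewrite -addnn leq_addr].
rewrite series_cc.
have -> : (fun n => a n * (1 ^+ 2) ^+ n) = a by apply/funext => i; rewrite !expr1n mulr1.
apply: nondecreasing_cvgn_le => //.
by move=> p q pq; apply: nondecreasing_series.
Qed.

Lemma cc_cvg (a : nat -> R) : (forall n, 0 <= a n) -> cvgn (series a) ->
  forall y : R, `|y| < 1 -> cvgn (pseries (cc a) y).
Proof.
move=> a0 ca y y1.
by apply: (@is_cvg_pseries_inside R (cc a) 1 y (cc_cvg1 a a0 ca)); rewrite normr1.
Qed.

Lemma cc_lim (a : nat -> R) : (forall n, 0 <= a n) -> cvgn (series a) ->
  forall y : R, `|y| < 1 ->
  limn (series (fun n => a n * (y ^+ 2) ^+ n)) = limn (pseries (cc a) y).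
Proof.
move=> a0 ca y y1.
have C := cc_cvg a a0 ca y y1.
have -> : series (fun n => a n * (y ^+ 2) ^+ n) =
          (pseries (cc a) y) \o (fun n => n.*2).
  by apply/funext => N /=; rewrite -series_cc.
apply: cvg_lim => //.
apply: cvg_comp; first exact: double_infty.
exact: C.
Qed.


Definition Dk (f : nat -> R) k (x : R) := limn (pseries (iter k (@pseries_diffs R) f) x).

Lemma Dk_derive (f : nat -> R) :
  (forall y : R, `|y| < 1 -> cvgn (pseries f y)) ->
  forall k (x : R), `|x| < 1 -> is_derive x (1 : R) (Dk f k) (Dk f k.+1 x).
Proof.
move=> H k x x1.
pose K := (1 + `|x|) / 2.
have x0 := normr_ge0 x.
have K0 : 0 <= K by rewrite /K; lra.
have K1 : `|K| < 1 by rewrite (ger0_norm K0) /K; lra.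
have xK : `|x| < `|K| by rewrite (ger0_norm K0) /K; lra.
have := @pseries_snd_diffs R (iter k (@pseries_diffs R) f) K x (iter_diffs_cvg f H k K K1) (iter_diffs_cvg f H k.+1 K K1)
   (iter_diffs_cvg f H k.+2 K K1) xK.
by rewrite /Dk.
Qed.

Lemma near_unit (x : R) : `|x| < 1 -> \forall z \near x, `|z| < 1.
Proof.
move=> x1; apply/nbhs_ballP; exists (1 - `|x|) => /=; first by lra.
move=> z; rewrite /ball /= => Hz.
have : `|z| <= `|x| + `|x - z|.
  have := ler_normB x (x - z).
  by have -> : x - (x - z) = z by ring.
lra.
Qed.

Lemma derive_Dk (g : R -> R) (f : nat -> R) :
  (forall y : R, `|y| < 1 -> cvgn (pseries f y)) ->
  (forall x : R, `|x| < 1 -> g x = Dk f 0 x) ->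
  forall k (x : R), `|x| < 1 -> derive1n k g x = Dk f k x.
Proof.
move=> H Hg; elim=> [|k IH] x x1; first exact: Hg.
rewrite derive1nS derive1E.
rewrite (@near_eq_derive _ _ _ _ (Dk f k)).
  have D := Dk_derive f H k x x1; exact: derive_val.
near=> z; apply: IH; near: z; exact: near_unit.
Unshelve. all: by end_near.
Qed.


Lemma ffact_le_exp n m : (n ^_ m <= n ^ m)%N.
Proof.
elim: m => [|m IH]; first by rewrite ffactn0 expn0.
by rewrite ffactnSr expnSr leq_mul // leq_subr.
Qed.

Lemma exp_le_ffact2 n m : (m <= n)%N -> (n ^ m <= (n.*2) ^_ m)%N.
Proof.
elim: m => [|m IH] mn; first by rewrite ffactn0 expn0.
rewrite ffactnSr expnSr leq_mul //; first by apply: IH; apply: ltnW.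
by rewrite -addnn; lia.
Qed.

Lemma exp_le_ffact2' n m : (n ^ m <= m ^ m + (n.*2) ^_ m)%N.
Proof.
case: (leqP m n) => mn; first by rewrite (leq_trans (exp_le_ffact2 _ _ mn)) // leq_addl.
case: m mn => [|m] mn; first by rewrite !expn0 ffactn0.
by rewrite (leq_trans _ (leq_addr _ _)) // leq_exp2r // ltnW.
Qed.

Lemma bern (x : R) K : 0 <= x <= 1 -> 1 - K%:R * x <= (1 - x) ^+ K.
Proof.
move=> /andP[x0 x1]; elim: K => [|K IH]; first by rewrite mul0r subr0 expr0.
rewrite exprSr.
have h : (1 - K%:R * x) * (1 - x) <= (1 - x) ^+ K * (1 - x) by rewrite ler_wpM2r // subr_ge0.
have K0 : 0 <= K%:R :> R by [].
rewrite -addn1 natrD.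
have : 0 <= K%:R * x * x by rewrite !mulr_ge0.
nra.
Qed.

Lemma le_from_pow (Q M : R) K : 0 <= Q ->
  (forall lam : R, 0 < lam < 1 -> lam ^+ K * Q <= M) -> Q <= M.
Proof.
move=> Q0 H; apply/ler_addgt0Pr => e e0.
pose eps := e / (K%:R * Q + e + 1).
have KQ : 0 <= K%:R * Q by rewrite mulr_ge0.
have D0 : 0 < K%:R * Q + e + 1 by lra.
have epsE : eps * (K%:R * Q + e + 1) = e by rewrite /eps divfK // gt_eqF.
have eps0 : 0 < eps by rewrite /eps divr_gt0.
have eps1 : eps < 1 by rewrite /eps ltr_pdivrMr // mul1r; lra.
have Hl : 0 < 1 - eps < 1 by apply/andP; split; lra.
have HK := H _ Hl.
have B : 1 - K%:R * eps <= (1 - eps) ^+ K by apply: bern; apply/andP; split; lra.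
have B2 : (1 - K%:R * eps) * Q <= (1 - eps) ^+ K * Q by rewrite ler_wpM2r.
have ee : 0 <= eps * e by rewrite mulr_ge0 // ltW.
nra.
Qed.


Lemma sum_shift (F : nat -> R) m J : (forall i, (i < m)%N -> F i = 0) ->
  \sum_(0 <= j < J) F (j + m)%N = \sum_(0 <= i < J + m) F i.
Proof.
move=> F0.
rewrite [RHS](@big_cat_nat _ _ _ m) //; last by rewrite leq_addl.
rewrite big_nat big1 ?add0r; last by move=> i /andP[_ im]; exact: F0.
rewrite /= add0r.
have -> : \sum_(m <= i < J + m) F i = \sum_(0 + m <= i < J + m) F i by rewrite add0n.
by rewrite big_addn addnK.
Qed.

Lemma sum_sparse_ff m (a : nat -> R) N :
  \sum_(0 <= i < N.*2) ((i ^_ m)%:R * cc a i) =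
  \sum_(0 <= n < N) (((n.*2) ^_ m)%:R * a n).
Proof.
rewrite -(sum_sparse (fun n => ((n.*2) ^_ m)%:R * a n)); apply: eq_bigr => i _.
rewrite /cc; case: ifP => oi; first by rewrite mulr0.
by have := odd_double_half i; rewrite oi add0n => ->.
Qed.

End Aux.
Arguments cvg_lin_geom {R}.
Arguments pseries_diffs_cvg {R}.
Arguments iter_diffs_cvg {R}.
Arguments iter_diffsE {R}.
Arguments cc {R}.
Arguments sum_sparse {R}.
Arguments series_cc {R}.
Arguments cc_cvg1 {R}.
Arguments cc_cvg {R}.
Arguments cc_lim {R}.
Arguments Dk {R}.
Arguments Dk_derive {R}.
Arguments near_unit {R}.
Arguments derive_Dk {R}.
Arguments bern {R}.
Arguments le_from_pow {R}.
Arguments sum_shift {R}.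
Arguments sum_sparse_ff {R}.
Section Integ.
Variable R : realType.
Variables (d : measure_display) (U : measurableType d) (nu : probability U R).

Lemma int_prod (f g : U -> R) :
  measurable_fun setT f -> measurable_fun setT g ->
  nu.-integrable setT (fun u => (f u ^+ 2)%:E) ->
  nu.-integrable setT (fun u => (g u ^+ 2)%:E) ->
  nu.-integrable setT (fun u => (f u * g u)%:E).
Proof.
move=> mf mg If Ig.
apply: (@le_integrable _ _ _ _ _ measurableT _ (fun u => (f u ^+ 2 + g u ^+ 2)%:E)).
- by apply/measurable_EFinP; exact: measurable_funM.
- move=> u _; rewrite !abse_EFin lee_fin.
  have h1 := sqr_ge0 (f u - g u); have h2 := sqr_ge0 (f u + g u).
  rewrite (ger0_norm (addr_ge0 (sqr_ge0 _) (sqr_ge0 _))) ler_norml.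
  apply/andP; split; nra.
- exact: (integrableD measurableT If Ig).
Qed.


Lemma SF2_partial (kn : nat -> R) (Mre Mim : nat -> U -> R) :
  monomials_of nu kn Mre Mim -> forall (lam : R) N,
  (\int[nu]_u (((\sum_(n < N) lam ^+ n * Mre n u) ^+ 2 +
               (\sum_(n < N) lam ^+ n * Mim n u) ^+ 2)%:E))%E
  = (\sum_(n < N) (n`!%:R * kn n) * (lam ^+ 2) ^+ n)%:E.
Proof.
case=> Hm Hi Hd Ho lam N.
pose P (n k : nat) u := lam ^+ n * lam ^+ k * (Mre n u * Mre k u + Mim n u * Mim k u).
have Qint : forall n k, nu.-integrable setT
    (fun u => (Mre n u * Mre k u + Mim n u * Mim k u)%:E).
  move=> n k.
  have := integrableD measurableT
    (int_prod _ _ (Hm n).1 (Hm k).1 (Hi n).1 (Hi k).1)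
    (int_prod _ _ (Hm n).2 (Hm k).2 (Hi n).2 (Hi k).2).
  by apply: eq_integrable => // u _ /=; rewrite EFinD.
have Pint : forall n k, nu.-integrable setT (fun u => (P n k u)%:E).
  move=> n k; have := integrableZl measurableT (lam ^+ n * lam ^+ k) (Qint n k).
  by apply: eq_integrable => // u _ /=; rewrite /P EFinM.
have Hint : forall n k : nat, (\int[nu]_u (P n k u)%:E =
    if n == k then ((n`!%:R * kn n) * (lam ^+ 2) ^+ n)%:E else 0)%E.
  move=> n k; rewrite /P.
  under eq_integral do rewrite EFinM.
  rewrite integralZl //; case: eqVneq => [<-|nk].
    under eq_integral do rewrite -!expr2.
    by rewrite Hd -EFinM -exprM mul2n -addnn exprD; congr (_%:E); ring.
  by rewrite (Ho n k nk).1 mule0.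
have E : forall u, ((\sum_(n < N) lam ^+ n * Mre n u) ^+ 2 +
               (\sum_(n < N) lam ^+ n * Mim n u) ^+ 2) =
               \sum_(n < N) \sum_(k < N) P n k u.
  move=> u; rewrite !expr2 !mulr_suml -big_split; apply: eq_bigr => n _.
  rewrite !mulr_sumr -big_split; apply: eq_bigr => k _.
  by rewrite /P /=; ring.
under eq_integral do rewrite E -sumEFin.
rewrite integral_sum //; last first.
  move=> n; have H := @integrable_sum _ _ _ nu setT measurableT _ (index_enum 'I_N) xpredT
     (fun (k : 'I_N) u => (P n k u)%:E) (fun k _ => Pint n k).
  apply: eq_integrable H => //.
  by move=> u _; rewrite sumEFin.
rewrite -sumEFin; apply: eq_bigr => n _.
under eq_integral do rewrite -sumEFin.
rewrite integral_sum //.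
rewrite (bigD1 n) //= Hint eqxx big1 ?adde0 // => k kn'.
rewrite Hint; case: eqP => // nk.
by exfalso; move/eqP: kn'; apply; apply: val_inj.
Qed.

End Integ.

Lemma SF2_eq (R : realType) (d : measure_display) (U : measurableType d)
  (nu : probability U R) (kn : nat -> R) (Mre Mim : nat -> U -> R) :
  monomials_of nu kn Mre Mim -> forall lam : R,
  SF2_nu nu Mre Mim lam = limn (series (fun n => (n`!%:R * kn n) * (lam ^+ 2) ^+ n)).
Proof.
move=> Hm lam; rewrite /SF2_nu; f_equal; f_equal; apply/funext => N.
by rewrite (@SF2_partial R d U nu kn Mre Mim Hm) /= /series /= big_mkord.
Qed.

Local Close Scope classical_set_scope.

Theorem theorem2p8 (R : realType) (d : measure_display) (U : measurableType d)
  (nu : probability U R) (kn : nat -> R) (Mre Mim : nat -> U -> R) (m : nat) :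
  in_L2mu kn ->
  monomials_of nu kn Mre Mim ->
  (in_Dm2 m kn <->
   exists M : R, forall lam : R, 0 < lam < 1 ->
     derive1n m (SF2_nu nu Mre Mim) lam <= M).
Proof.
move=> [kn0 ca] Hmon.
pose a := fun n => n`!%:R * kn n.
have a0 : forall n, 0 <= a n by move=> n; rewrite mulr_ge0.
have Hcc := cc_cvg a a0 ca.
have Hg : forall x : R, `|x| < 1 -> SF2_nu nu Mre Mim x = Dk (cc a) 0 x.
  move=> x x1; rewrite (SF2_eq _ _ _ _ _ _ _ Hmon) (cc_lim a a0 ca x x1) //.
pose T (lam : R) j := ((j + m) ^_ m)%:R * cc a (j + m) * lam ^+ j.
pose q J := \sum_(0 <= j < J) ((j + m) ^_ m)%:R * cc a (j + m)%N.
have EqT : forall lam, pseries (iter m (@pseries_diffs R) (cc a)) lam = series (T lam).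
  by move=> lam; apply/funext => J; rewrite /pseries /series /=; apply: eq_bigr => j _; rewrite iter_diffsE.
have cvgT : forall lam : R, 0 < lam < 1 -> cvgn (series (T lam)).
  move=> lam /andP[l0 l1]; rewrite -EqT; apply: iter_diffs_cvg => //.
  by rewrite (ger0_norm (ltW l0)).
have Hder : forall lam : R, 0 < lam < 1 ->
    derive1n m (SF2_nu nu Mre Mim) lam = limn (series (T lam)).
  move=> lam /andP[l0 l1]; rewrite (derive_Dk _ _ Hcc Hg) ?(ger0_norm (ltW l0)) //.
  by rewrite /Dk EqT.
have T0 : forall lam : R, 0 <= lam -> forall j, 0 <= T lam j.
  by move=> lam l0 j; rewrite /T /cc; case: ifP => _; rewrite ?mulr0 ?mul0r // !mulr_ge0 // exprn_ge0.
have cc0 : forall i, 0 <= cc a i by move=> i; rewrite /cc; case: ifP.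
have qE : forall J, q J = \sum_(0 <= i < J + m) (i ^_ m)%:R * cc a i.
  move=> J; rewrite /q (sum_shift (fun i => (i ^_ m)%:R * cc a i)) // => i im.
  by rewrite ffact_small // mul0r.
have qsp : forall N, \sum_(0 <= n < N) (((n.*2) ^_ m)%:R * a n) <= q N.*2.
  move=> N; rewrite -sum_sparse_ff qE.
  by apply: nondecreasing_series => [i _ _|]; [rewrite mulr_ge0 | rewrite leq_addr].
split.
- move=> Hd.
  pose S := limn (series (fun n => (1 + n%:R ^+ m) * n`!%:R * kn n)).
  have f0 : forall n, 0 <= (1 + n%:R ^+ m) * n`!%:R * kn n.
    by move=> n; rewrite -mulrA; apply: mulr_ge0; [rewrite addr_ge0 // exprn_ge0 | rewrite mulr_ge0].
  exists (2 ^+ m * S) => lam l.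
  have l' := l; case/andP: l' => l0 l1.
  rewrite Hder //; apply: limr_le; first exact: cvgT.
  apply: nearW => J.
  have s1 : series (T lam) J <= q J.
    rewrite /series /q /=; apply: ler_sum_nat => j _; rewrite /T.
    by apply: ler_piMr; [rewrite mulr_ge0 | rewrite exprn_ile1 // ltW].
  have s2 : q J <= \sum_(0 <= n < J + m) ((n.*2) ^_ m)%:R * a n.
    rewrite qE -sum_sparse_ff.
    by apply: nondecreasing_series => [i _ _|]; [rewrite mulr_ge0 | rewrite -addnn leq_addr].
  have s3 : \sum_(0 <= n < J + m) ((n.*2) ^_ m)%:R * a n <=
      2 ^+ m * series (fun n => (1 + n%:R ^+ m) * n`!%:R * kn n) (J + m).
    rewrite /series /= mulr_sumr; apply: ler_sum_nat => n _.
    have hn : ((n.*2) ^_ m <= 2 ^ m * n ^ m)%N.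
      by rewrite (leq_trans (ffact_le_exp _ _)) // -mul2n expnMn.
    have h : ((n.*2) ^_ m)%:R <= 2 ^+ m * (1 + n%:R ^+ m) :> R.
      have : ((n.*2) ^_ m)%:R <= (2 ^ m * n ^ m)%:R :> R by rewrite ler_nat.
      rewrite natrM !natrX => h1; apply: (le_trans h1).
      by rewrite ler_wpM2l ?exprn_ge0 // lerDr.
    have -> : 2 ^+ m * ((1 + n%:R ^+ m) * n`!%:R * kn n) = (2 ^+ m * (1 + n%:R ^+ m)) * a n.
      by rewrite /a; ring.
    by rewrite ler_wpM2r.
  have s4 : series (fun n => (1 + n%:R ^+ m) * n`!%:R * kn n) (J + m) <= S.
    apply: nondecreasing_cvgn_le => //.
    by move=> x y xy; apply: nondecreasing_series.
  have s5 : 2 ^+ m * series (fun n => (1 + n%:R ^+ m) * n`!%:R * kn n) (J + m) <= 2 ^+ m * S.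
    by rewrite ler_wpM2l // exprn_ge0.
  lra.
- move=> [M HM]; rewrite /in_Dm2.
  pose A := limn (series a).
  have Aub : forall N, series a N <= A.
    apply: nondecreasing_cvgn_le => //.
    by move=> x y xy; apply: nondecreasing_series.
  have qM : forall J, q J <= M.
    move=> J; apply: (le_from_pow _ _ J) => [|lam l].
      by rewrite /q; apply: sumr_ge0 => j _; rewrite mulr_ge0.
    have l' := l; case/andP: l' => l0 l1.
    have t1 : lam ^+ J * q J <= series (T lam) J.
      rewrite /q mulr_sumr /series /=; apply: ler_sum_nat => j /andP[_ jJ]; rewrite /T.
      rewrite mulrC ler_wpM2l ?mulr_ge0 //.
      by apply: ler_wiXn2l; [apply: ltW | apply: ltW | apply: ltnW].
    have t2 : series (T lam) J <= limn (series (T lam)).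
      apply: nondecreasing_cvgn_le; last exact: cvgT.
      by move=> x y xy; apply: nondecreasing_series => // i _ _; apply: T0; apply: ltW.
    have t3 := HM lam l; rewrite Hder // in t3.
    lra.
  apply: nondecreasing_is_cvgn.
    move=> x y xy; apply: nondecreasing_series => // n _ _.
    by rewrite -mulrA; apply: mulr_ge0; [rewrite addr_ge0 // exprn_ge0 | rewrite mulr_ge0].
  exists (A + (m ^ m)%:R * A + M) => _ [N _ <-].
  have e1 : series (fun n => (1 + n%:R ^+ m) * n`!%:R * kn n) N <=
      series a N + (m ^ m)%:R * series a N + \sum_(0 <= n < N) ((n.*2) ^_ m)%:R * a n.
    rewrite /series /= mulr_sumr -!big_split /=; apply: ler_sum_nat => n _.
    have h : n%:R ^+ m <= (m ^ m)%:R + ((n.*2) ^_ m)%:R :> R.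
      by rewrite -natrX -natrD ler_nat exp_le_ffact2'.
    have -> : (1 + n%:R ^+ m) * n`!%:R * kn n = (1 + n%:R ^+ m) * a n by rewrite /a mulrA.
    have := a0 n; nra.
  have e2 : (m ^ m)%:R * series a N <= (m ^ m)%:R * A by rewrite ler_wpM2l.
  have e3 := qsp N; have e4 := qM N.*2; have e5 := Aub N.
  lra.
Qed.
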